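(* Let $X_n=\{0,1\}^n\setminus\{0^n\}$ and let $\mathcal{C}_n$ be the class of negative parity functions over $X_n$, i.e. $\lnot\oplus_s:X_n\to\{0,1\}$, $\lnot\oplus_s(x)=1-(s\cdot x\bmod 2)$, for $s\in\{0,1\}^n$. For any query function $g:\{0,1\}^n\to\{-1,+1\}$, there are at most $2^{n/2+2}$ predicates in $\mathcal{C}_n$ that are not $2^{-n/4}$-independent from $g$.
   Context: For $f\in\mathcal{C}_n$ let $S_f=\{x\in X_n: f(x)=1\}$. A predicate $f$ is $\xi$-independent from $g$ if $\left|\mathbf{E}_{x\in S_f}[g(x)]-\mathbf{E}_{x\in\{0,1\}^n}[g(x)]\right|\le\xi$, expectations over the uniform distribution on the indicated sets. *)

(* Defs.v *)
From HB Require Import structures.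
From mathcomp Require Import all_boot all_order all_algebra.
From mathcomp Require Import reals exp.
Set Implicit Arguments. Unset Strict Implicit. Unset Printing Implicit Defensive.
Import Order.TTheory GRing.Theory Num.Theory.
Local Open Scope ring_scope.

Definition cube (n : nat) := {ffun 'I_n -> bool}.

Definition Xn (n : nat) : {set cube n} := [set x : cube n | x != [ffun=> false]].

Definition neg_parity (n : nat) (s : cube n) (x : cube n) : nat :=
  (1 - (\sum_(i < n) ((s i && x i) : nat)) %% 2)%N.

Definition S_f (n : nat) (f : cube n -> nat) : {set cube n} :=
  [set x in Xn n | f x == 1%N].

(* uniform expectation over a finite set (0 on the empty set) *)
Definition avg (R : realType) (T : finType) (A : {set T}) (g : T -> R) : R :=
  (\sum_(x in A) g x) / #|A|%:R.

Definition xi_independent (R : realType) (n : nat) (f : cube n -> nat)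
  (g : cube n -> R) (xi : R) : bool :=
  `| avg (S_f f) g - avg [set: cube n] g | <= xi.

(* Main.v *)
Require Import Defs.
From HB Require Import structures.
From mathcomp Require Import all_boot all_order all_algebra.
From mathcomp Require Import reals exp ring lra.
Import Order.TTheory GRing.Theory Num.Theory.
Local Open Scope ring_scope.
Set Implicit Arguments. Unset Strict Implicit.

Definition dotc (n : nat) (s x : cube n) : nat := (\sum_(i < n) ((s i && x i) : nat))%N.
Definition chi (R : realType) (n : nat) (s x : cube n) : R :=
  \prod_(i < n) (-1) ^+ (s i && x i).
Definition xorv (n : nat) (x y : cube n) : cube n := [ffun i => x i (+) y i].
Definition zc (n : nat) : cube n := [ffun=> false].

Lemma chiE (R : realType) n (s x : cube n) :
  chi R s x = if odd (dotc s x) then -1 else 1.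
Proof. rewrite /chi prodrXr -signr_odd /dotc; by case: odd; rewrite ?expr1 ?expr0. Qed.

Lemma chiC (R : realType) n (s x : cube n) : chi R s x = chi R x s.
Proof. by apply: eq_bigr => i _; rewrite andbC. Qed.

Lemma chi0 (R : realType) n (s : cube n) : chi R s (zc n) = 1.
Proof. by rewrite /chi big1 // => i _; rewrite ffunE andbF. Qed.

Lemma chiM (R : realType) n (s x y : cube n) :
  chi R s x * chi R s y = chi R s (xorv x y).
Proof.
rewrite /chi -big_split /=; apply: eq_bigr => i _.
by rewrite ffunE; case: (s i); case: (x i); case: (y i); rewrite /= ?mulr1 ?mul1r ?mulrNN ?mulr1.
Qed.

Lemma chi_sum0 (R : realType) n (z : cube n) : z != zc n ->
  \sum_(s : cube n) chi R s z = 0.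
Proof.
move=> nz.
have [i zi] : exists i, z i.
  apply/existsP; apply: contraR nz; rewrite negb_exists => /forallP H.
  by apply/eqP/ffunP => j; rewrite ffunE; apply/negbTE/H.
pose f (s : cube n) : cube n := [ffun j => if j == i then ~~ s j else s j].
have fK : involutive f.
  by move=> s; apply/ffunP => j; rewrite !ffunE; case: eqP => // ->; rewrite negbK.
have Hf : forall s, chi R (f s) z = - chi R s z.
  move=> s; rewrite /chi (bigD1 i) //= [in RHS](bigD1 i) //= ffunE eqxx zi.
  rewrite (eq_bigr (fun j => (-1) ^+ (s j && z j))); last first.
    by move=> j /negbTE ji; rewrite ffunE ji.
  by case: (s i) => /=; rewrite ?expr1 ?expr0 ?mulN1r ?mul1r ?opprK.
have : \sum_(s : cube n) chi R s z = - \sum_(s : cube n) chi R s z.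
  rewrite {1}(reindex_inj (inv_inj fK)) /= -sumrN; apply: eq_bigr => s _; exact: Hf.
move=> H; lra.
Qed.

Lemma xorv0 n (x y : cube n) : (xorv x y == zc n) = (x == y).
Proof.
apply/eqP/eqP => [H|->].
  apply/ffunP => i; have := congr1 (fun f : cube n => f i) H.
  by rewrite !ffunE; case: (x i); case: (y i).
by apply/ffunP => i; rewrite !ffunE addbb.
Qed.

Lemma chi_sum_all (R : realType) n (z : cube n) :
  \sum_(s : cube n) chi R s z = if z == zc n then #|{: cube n}|%:R else 0.
Proof.
case: eqP => [->|/eqP nz]; last exact: chi_sum0.
by rewrite (eq_bigr (fun=> 1)) ?sumr_const // => s _; rewrite chi0.
Qed.

Lemma parseval (R : realType) n (g : cube n -> R) :
  \sum_(s : cube n) (\sum_(x : cube n) g x * chi R s x) ^+ 2 =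
  #|{: cube n}|%:R * \sum_(x : cube n) g x ^+ 2.
Proof.
have E : forall s, (\sum_(x : cube n) g x * chi R s x) ^+ 2 =
   \sum_(x : cube n) \sum_(y : cube n) (g x * g y) * chi R s (xorv x y).
  move=> s; rewrite expr2 big_distrlr /=; apply: eq_bigr => x _.
  by apply: eq_bigr => y _; rewrite mulrACA chiM.
under eq_bigr => s _ do rewrite E.
rewrite exchange_big /= mulr_sumr; apply: eq_bigr => x _.
rewrite exchange_big /= (bigD1 x) //= [X in _ + X]big1; last first.
  move=> y yx; rewrite -mulr_sumr.
  by rewrite chi_sum0 ?mulr0 // xorv0 eq_sym.
by rewrite -mulr_sumr chi_sum_all xorv0 eqxx addr0 expr2 mulrC.
Qed.

Lemma r_big (R : realType) (r : R) : 0 < r -> 32 <= r ^+ 4 -> 9/4 <= r.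
Proof.
move=> r0 h; rewrite leNgt; apply/negP => hr.
have h2 : r ^+ 2 < (9/4) ^+ 2 by rewrite expr2 expr2; nra.
have : r ^+ 4 < (9/4)^+2 * (9/4)^+2.
  rewrite (_ : r ^+ 4 = r ^+2 * r^+2); last by rewrite -exprD.
  have : 0 <= r ^+ 2 by rewrite sqr_ge0.
  nra.
lra.
Qed.

Lemma r_fact (R : realType) (r : R) : 0 < r -> 32 <= r ^+ 4 -> 8 * r + 4 <= r ^+ 4.
Proof.
move=> r0 h; have r9 := @r_big _ r r0 h.
have : (9/4)^+3 * r <= r ^+ 4.
  rewrite (_ : r ^+ 4 = r ^+ 3 * r); last by rewrite exprSr.
  apply: ler_wpM2r; first lra.
  have r3 : (9/4) ^+ 3 <= r ^+ 3 by apply: lerXn2r; rewrite ?nnegrE; lra.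
  done.
rewrite !exprS expr0; nra.
Qed.

Lemma arith_z (R : realType) (N r D S g0 : R) : 0 < r -> N = r ^+ 4 -> 32 <= N ->
  -N <= S <= N -> (g0 = 1 \/ g0 = -1) -> D * (N - 1) * N = S - g0 * N ->
  1 < `|D| * r -> False.
Proof.
move=> r0 NE N32 /andP[S1 S2] g hD hr.
have f := @r_fact _ r r0; rewrite -NE in f; have {}f := f N32.
have hA : `|D| * (N - 1) * N <= 2 * N.
  have [D0|D0] := leP 0 D.
    rewrite ger0_norm // hD; case: g => ->; lra.
  rewrite ltr0_norm // mulNr mulNr hD; case: g => ->; lra.
have h1 : `|D| * (N - 1) <= 2 by nra.
have h2 : `|D| * r * (N - 1) <= 2 * r by nra.
have : `|D| * r * (N - 1) > N - 1 by nra.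
nra.
Qed.

Lemma arith_nz (R : realType) (N r D a S g0 : R) : 0 < r -> 32 <= N ->
  -N <= S <= N -> (g0 = 1 \/ g0 = -1) -> D * (N - 2) * N = a * N - 2 * g0 * N + 2 * S ->
  1 < `|D| * r -> N - 2 - 4 * r < `|a| * r.
Proof.
move=> r0 N32 /andP[S1 S2] g hD hr.
have ha : -`|a| <= a <= `|a| by rewrite -ler_norml.
case/andP: ha => a1 a2.
have hA : `|D| * (N - 2) * N <= (`|a| + 4) * N.
  have [D0|D0] := leP 0 D.
    rewrite ger0_norm // hD; case: g => ->; nra.
  rewrite ltr0_norm // mulNr mulNr hD; case: g => ->; nra.
have h1 : `|D| * (N - 2) <= `|a| + 4 by nra.
have h2 : `|D| * r * (N - 2) <= (`|a| + 4) * r by nra.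
have : `|D| * r * (N - 2) > N - 2 by nra.
nra.
Qed.

Lemma arith_final (R : realType) (k r : R) : 0 <= k -> 0 < r -> 32 <= r ^+ 4 ->
  k * (r ^+ 4 - 2 - 4 * r) ^+ 2 <= r ^+ 2 * (r ^+ 4 * r ^+ 4) -> k <= 4 * r ^+ 2.
Proof.
move=> k0 r0 h H; have f := @r_fact _ r r0 h.
set N := r ^+ 4 in f h H *; set T := N - 2 - 4 * r in H.
have T0 : 0 < T by rewrite /T; nra.
have hT : N <= 2 * T by rewrite /T; lra.
have hN : N * N <= 4 * (T * T) by nra.
have : k * (T * T) <= 4 * r ^+ 2 * (T * T).
  apply: (le_trans (y := r ^+ 2 * (N * N))); first by rewrite -expr2.
  have : 0 <= r ^+ 2 by rewrite sqr_ge0.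
  nra.
move=> H2; have TT : 0 < T * T by nra.
by rewrite ler_pM2r in H2.
Qed.

Lemma sumS (R : realType) n (s : cube n) (h : cube n -> R) :
  \sum_(x in S_f (neg_parity s)) h x =
  (\sum_(x : cube n) h x + \sum_(x : cube n) h x * chi R s x) / 2 - h (zc n).
Proof.
rewrite big_mkcond /=.
transitivity (\sum_(x : cube n) ((h x + h x * chi R s x) / 2 -
                 (if x == zc n then h x else 0))).
  apply: eq_bigr => x _; rewrite /S_f /Xn !inE.
  case: (x =P zc n) => [->|/eqP nz].
    by rewrite chi0 /=; field.
  rewrite /= subr0 chiE /neg_parity modn2 /dotc.
  by case: odd => /=; field.
rewrite sumrB -big_mkcond big_pred1_eq -mulr_suml big_split.
done.
Qed.

Lemma card_cube n : #|{: cube n}| = (2 ^ n)%N.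
Proof. by rewrite /cube card_ffun card_bool card_ord. Qed.

Theorem mainTheorem5 (R : realType) (n : nat) (g : cube n -> R)
  (hg : forall x, g x = 1 \/ g x = -1) :
  (#|[set s : cube n |
      ~~ xi_independent (neg_parity s) g (2 `^ (- (n%:R / 4)))]|%:R : R)
    <= 2 `^ (n%:R / 2 + 2).
Proof.
set r : R := 2 `^ (n%:R / 4).
have r0 : 0 < r by apply: powR_gt0.
have h2 : (0 : R) <= 2 by [].
have rN : r ^+ 4 = (2 ^ n)%:R.
  rewrite /r -powR_mulrn ?ltW // -powRrM natrX -powR_mulrn //; congr (_ `^ _).
  by rewrite -[4%:R]/(4 : R); field.
have bnd : 2 `^ (n%:R / 2 + 2) = 4 * r ^+ 2 :> R.
  rewrite powRD; last by apply/implyP => _; rewrite pnatr_eq0.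
  rewrite mulrC; congr (_ * _).
    by rewrite powR_mulrn // expr2 -natrM.
  rewrite /r -powR_mulrn ?ltW // -powRrM; congr (_ `^ _).
  by rewrite -[2%:R]/(2 : R); field.
rewrite bnd powRN -/r.
set bad := [set s | _].
have NE : #|{: cube n}|%:R = r ^+ 4 :> R by rewrite card_cube rN.
have [n4|n5] := leqP n 4.
  have k1 : (#|bad|%:R : R) <= r ^+ 4.
    by rewrite -NE ler_nat; apply: max_card.
  have : r ^+ 4 <= 16.
    rewrite rN (_ : 16 = (2 ^ 4)%N%:R) // ler_nat leq_pexp2l //.
  move=> h16; rewrite -!/(GRing.exp _ _) in k1 h16 *.
  have : r ^+ 2 <= 4.
    rewrite leNgt; apply/negP => h; have : 16 < r ^+ 2 * r ^+ 2 by nra.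
    by rewrite -exprD; lra.
  have : r ^+ 4 = r ^+ 2 * r ^+ 2 by rewrite -exprD.
  have : 0 <= r ^+ 2 by rewrite sqr_ge0.
  nra.
have N32 : 32 <= r ^+ 4.
  by rewrite rN (_ : 32 = (2 ^ 5)%N%:R) // ler_nat leq_pexp2l.
set N := r ^+ 4 in N32 NE *.
have NrE : N = r ^+ 4 by [].
clearbody N.
have N0 : N != 0 by apply/eqP => h; rewrite h in N32; lra.
set Sg := \sum_(x : cube n) g x.
have gn : forall x, `|g x| = 1 by move=> x; case: (hg x) => ->; rewrite ?normrN normr1.
have hS : -N <= Sg <= N.
  rewrite -ler_norml -NE; apply: (le_trans (ler_norm_sum _ _ _)).
  by rewrite (eq_bigr (fun=> 1)) ?sumr_const // => x _; rewrite gn.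
pose a s := \sum_(x : cube n) g x * chi R s x.
have PS : \sum_(s : cube n) a s ^+ 2 = N * N.
  rewrite /a parseval NE; congr (_ * _).
  rewrite (eq_bigr (fun=> 1)) ?sumr_const // => x _.
  by case: (hg x) => ->; rewrite ?sqrrN expr1n.
set T := N - 2 - 4 * r.
have claim : forall s, s \in bad -> T < `|a s| * r.
  move=> s; rewrite inE /xi_independent -ltNge => H.
  rewrite -(ltr_pM2r r0) mulVf ?gt_eqF // in H.
  move: H; rewrite /avg cardsT NE.
  have -> : \sum_(x in [set: cube n]) g x = Sg by apply: eq_bigl => x; rewrite in_setT.
  have -> : (#|S_f (neg_parity s)|%:R : R) = \sum_(x in S_f (neg_parity s)) 1.
    by rewrite sumr_const.
  rewrite !sumS -/Sg -/(a s).
  have -> : \sum_(x : cube n) (1 : R) = N by rewrite sumr_const NE.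
  under eq_bigr => x _ do rewrite mul1r chiC.
  rewrite chi_sum_all NE.
  have g0 := hg (zc n).
  case: eqP => [sz|/eqP sz].
    have -> : a s = Sg.
      by rewrite /a sz; apply: eq_bigr => x _; rewrite chiC chi0 mulr1.
    move=> H; exfalso.
    apply: (arith_z r0 NrE N32 hS g0 _ H).
    field; apply/andP; split=> //; apply/eqP => h; lra.
  move=> H; apply: (arith_nz r0 N32 hS g0 _ H).
  field; apply/andP; split=> //; apply/eqP => h; lra.
have T0 : 0 < T.
  have := @r_fact _ r r0; rewrite -NrE => /(_ N32) f; rewrite /T; lra.
have key : (#|bad|%:R : R) * T ^+ 2 <= r ^+ 2 * (N * N).
  rewrite -PS mulr_sumr mulrC mulr_natr -sumr_const.
  apply: (le_trans (y := \sum_(s in bad) r ^+ 2 * a s ^+ 2)).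
    apply: ler_sum => s sb; have := claim s sb => h.
    rewrite -(real_normK (num_real (a s))).
    have u0 : 0 <= `|a s| by [].
    move: h u0; set u := `|a s| => h u0.
    rewrite !expr2; nra.
  rewrite [X in _ <= X](bigID (mem bad)) /= lerDl.
  by apply: sumr_ge0 => s _; apply: mulr_ge0; rewrite ?sqr_ge0.
apply: arith_final => //; rewrite -NrE //.
Qed.
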